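(* Let $N\ge 2$ and let $\mathcal{H}$ be the class of $N$-layer feedforward networks $h=\varphi_N\circ\cdots\circ\varphi_1:\mathcal{X}\to\mathcal{Y}$ with $\varphi_k\in\Phi_k$ for each $k$. For $i\in\{1,\dots,N-1\}$ let $\mathcal{G}_i=\{\varphi_i\circ\cdots\circ\varphi_1:\varphi_k\in\Phi_k\}$ (first $i$ layers) and $\mathcal{F}_i=\{\varphi_N\circ\cdots\circ\varphi_{i+1}:\varphi_k\in\Phi_k\}$ (remaining layers), so $\mathcal{H}=\mathcal{F}_i\mathcal{G}_i$. Fix $h=\varphi_N\circ\cdots\circ\varphi_1\in\mathcal{H}$ and write $h=f_ig_i$ with $g_i=\varphi_i\circ\cdots\circ\varphi_1$, $f_i=\varphi_N\circ\cdots\circ\varphi_{i+1}$. Then for all $1\le i\le j\le N-1$: $$d_{{\mathcal{F}_i}_{\mathcal{G}_i\Delta\mathcal{G}_i}}(p_S,p_T)\le d_{{\mathcal{F}_j}_{\mathcal{G}_j\Delta\mathcal{G}_j}}(p_S,p_T)$$ and $$d_{\mathcal{F}_i\Delta\mathcal{F}_i}\big(p_S^{g_i}(Z),p_T^{g_i}(Z)\big)\ge d_{\mathcal{F}_j\Delta\mathcal{F}_j}\big(p_S^{g_j}(Z),p_T^{g_j}(Z)\big).$$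
   Context: $\mathcal{X}\subseteq\mathbb{R}^n$, $\mathcal{Y}=\{0,1\}$; $\Phi_k$ is a class of maps from the $(k-1)$-th layer space to the $k$-th layer space (layer $0$ space is $\mathcal{X}$, layer $N$ space is $\mathcal{Y}$). $p_S,p_T$ are probability distributions on $\mathcal{X}\times\mathcal{Y}$. Composition is written by juxtaposition. With zero-one loss $\ell(a,b)=\mathbf{1}[a\ne b]$, for $D\in\{S,T\}$ and hypotheses $h,h':\mathcal{X}\to\mathcal{Y}$, $R_D(h,h')=\mathbb{E}_{x\sim p_D}[\ell(h(x),h'(x))]$ ($x$ drawn from the $\mathcal{X}$-marginal of $p_D$). $p_D^{g}(Z)$ is the distribution of $g(X)$ for $X$ from the $\mathcal{X}$-marginal of $p_D$. For a predictor class $\mathcal{F}$ and embedding $g$: $d_{\mathcal{F}\Delta\mathcal{F}}(p_S^g(Z),p_T^g(Z))=\sup_{f_1,f_2\in\mathcal{F}}|R_S(f_1g,f_2g)-R_T(f_1g,f_2g)|$. For classes $\mathcal{F},\mathcal{G}$: $d_{\mathcal{F}_{\mathcal{G}\Delta\mathcal{G}}}(p_S,p_T)=\sup_{f\in\mathcal{F};\,g_1,g_2\in\mathcal{G}}|R_S(fg_1,fg_2)-R_T(fg_1,fg_2)|$. *)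

(* Defs.v *)
From HB Require Import structures.
From mathcomp Require Import all_boot all_order all_algebra.
From mathcomp Require Import all_classical all_reals all_analysis.
Set Implicit Arguments. Unset Strict Implicit. Unset Printing Implicit Defensive.
Import Order.TTheory GRing.Theory Num.Theory.
Local Open Scope classical_set_scope.
Local Open Scope ring_scope.

Definition loss01 {R : realType} {Y : Type} (a b : Y) : R :=
  \1_[set p : Y * Y | p.1 <> p.2] (a, b).

(* R_D(h,h') = E_{x ~ X-marginal of p_D}[ l(h x, h' x) ], with p_D a
   probability on X * Y (Y = {0,1} = bool); integrating over the joint
   distribution a function of the first coordinate only is integrating
   against the X-marginal. *)
Definition risk {d} {X : measurableType d} {R : realType} {Y' : Type}
  (P : probability (X * bool)%type R) (h h' : X -> Y') : \bar R :=
  (\int[P]_z (loss01 (h z.1) (h' z.1) : R)%:E)%E.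

Definition dFDeltaF {d} {X : measurableType d} {R : realType} {Zt Y' : Type}
  (PS PT : probability (X * bool)%type R) (F : set (Zt -> Y')) (g : X -> Zt)
  : \bar R :=
  ereal_sup [set r | exists f1 f2, F f1 /\ F f2 /\
     r = `| risk PS (f1 \o g) (f2 \o g) - risk PT (f1 \o g) (f2 \o g) |%E ].

Definition dFGDeltaG {d} {X : measurableType d} {R : realType} {Zt Y' : Type}
  (PS PT : probability (X * bool)%type R) (F : set (Zt -> Y')) (G : set (X -> Zt))
  : \bar R :=
  ereal_sup [set r | exists f g1 g2, F f /\ G g1 /\ G g2 /\
     r = `| risk PS (f \o g1) (f \o g2) - risk PT (f \o g1) (f \o g2) |%E ].

Section Layers.
Variables (d : measure_display) (X : measurableType d) (N : nat) (Z : nat -> Type).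

Definition layer (k : nat) : Type :=
  if k == 0%N as b return Type then (X : Type) else if k == N as b return Type then (bool : Type) else Z k.

Definition castL (m n : nat) (e : m = n) (x : layer m) : layer n :=
  eq_rect m layer x n e.

(* psi k : layer k -> layer k.+1  (this is phi_{k+1} of the paper). *)
Variable psi : forall k, layer k -> layer k.+1.

Fixpoint pref (i : nat) : layer 0 -> layer i :=
  match i return layer 0 -> layer i with
  | 0 => id
  | i'.+1 => @psi i' \o pref i'
  end.

Definition mid (i : nat) : forall m : nat, layer i -> layer (m + i) :=
  fix mid_rec (m : nat) : layer i -> layer (m + i) :=
  match m return layer i -> layer (m + i) with
  | 0 => id
  | m'.+1 => @psi (m' + i) \o mid_rec m'
  end.

End Layers.

Definition Gcls {d} (X : measurableType d) (N : nat) (Z : nat -> Type)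
  (Phi : forall k, set (layer X N Z k -> layer X N Z k.+1)) (i : nat)
  : set (X -> layer X N Z i) :=
  [set g | exists psi : forall k, layer X N Z k -> layer X N Z k.+1,
     (forall k, (k < i)%N -> Phi k (psi k)) /\ g = @pref d X N Z psi i].

Definition Fcls {d} (X : measurableType d) (N : nat) (Z : nat -> Type)
  (Phi : forall k, set (layer X N Z k -> layer X N Z k.+1)) (i : nat)
  : set (layer X N Z i -> layer X N Z N) :=
  [set f | exists (psi : forall k, layer X N Z k -> layer X N Z k.+1)
               (m : nat) (e : (m + i)%N = N),
     (forall k, (i <= k < N)%N -> Phi k (psi k)) /\
     f = castL e \o @mid d X N Z psi i m].

(* Main.v *)
Require Import Defs.
From HB Require Import structures.
From mathcomp Require Import all_boot all_order all_algebra.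
From mathcomp Require Import all_classical all_reals all_analysis.
Import Order.TTheory GRing.Theory Num.Theory.
Local Open Scope classical_set_scope.
Local Open Scope ring_scope.
From mathcomp Require Import zify.

Section H.
Variables (d : measure_display) (X : measurableType d) (N : nat) (Z : nat -> Type).
Notation L := (layer X N Z).
Notation T := (forall k, L k -> L k.+1).

Lemma pref_ext (psi psi' : T) i :
  (forall k, (k < i)%N -> psi k = psi' k) ->
  forall x, @pref d X N Z psi i x = @pref d X N Z psi' i x.
Proof.
elim: i => [//|i IH] H x /=.
rewrite IH; last by move=> k hk; apply: H; exact: ltnW.
by rewrite H.
Qed.

Lemma mid_ext (psi psi' : T) i m :
  (forall k, (i <= k)%N -> psi k = psi' k) ->
  forall y, @mid d X N Z psi i m y = @mid d X N Z psi' i m y.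
Proof.
move=> H; elim: m => [//|m IH] y /=.
rewrite IH H //; exact: leq_addl.
Qed.

Lemma mid_pref (psi : T) i m x :
  @mid d X N Z psi i m (@pref d X N Z psi i x) = @pref d X N Z psi (m + i) x.
Proof. by elim: m => [//|m IH] /=; rewrite IH. Qed.

Lemma cast_pref (psi : T) a b n (e : a = n) (e' : b = n) x :
  castL e (@pref d X N Z psi a x) = castL e' (@pref d X N Z psi b x).
Proof.
case: n / e' e => e; case: b / e.
by rewrite (eq_irrelevance (erefl a) _) .
Qed.
End H.

Theorem proposition5 (R : realType) (d : measure_display) (X : measurableType d)
  (N : nat) (hN : (2 <= N)%N) (Z : nat -> Type)
  (Phi : forall k, set (layer X N Z k -> layer X N Z k.+1))
  (PS PT : probability (X * bool)%type R)
  (phi : forall k, layer X N Z k -> layer X N Z k.+1)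
  (hphi : forall k, (k < N)%N -> Phi k (phi k))
  (i j : nat) (hi : (1 <= i)%N) (hij : (i <= j)%N) (hj : (j <= N - 1)%N) :
  (dFGDeltaG PS PT (@Fcls d X N Z Phi i) (@Gcls d X N Z Phi i)
     <= dFGDeltaG PS PT (@Fcls d X N Z Phi j) (@Gcls d X N Z Phi j))%E /\
  (dFDeltaF PS PT (@Fcls d X N Z Phi i) (@pref d X N Z phi i)
     >= dFDeltaF PS PT (@Fcls d X N Z Phi j) (@pref d X N Z phi j))%E.
Proof.
have ej : (N - j + j)%N = N by lia.
have ei : (N - i + i)%N = N by lia.
split.
- apply: le_ereal_sup => r [f [g1 [g2 [Ff [Gg1 [Gg2 ->]]]]]].
  case: Ff => psi [m [e [Hpsi ->]]].
  case: Gg1 => p1 [Hp1 ->]; case: Gg2 => p2 [Hp2 ->].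
  pose c1 : forall k, layer X N Z k -> layer X N Z k.+1 :=
    fun k => if (k < i)%N then p1 k else psi k.
  pose c2 : forall k, layer X N Z k -> layer X N Z k.+1 :=
    fun k => if (k < i)%N then p2 k else psi k.
  have key : forall (p c : forall k, layer X N Z k -> layer X N Z k.+1),
      c = (fun k => if (k < i)%N then p k else psi k) ->
      (castL ej \o @mid d X N Z psi j (N - j)%N) \o @pref d X N Z c j =
      (castL e \o @mid d X N Z psi i m) \o @pref d X N Z p i.
    move=> p c -> ; apply: funext => x /=.
    rewrite (@mid_ext d X N Z psi (fun k => if (k < i)%N then p k else psi k) j (N - j)%N); last first.
      by move=> k hk; have -> : (k < i)%N = false by lia.
    rewrite mid_pref.
    rewrite (@mid_ext d X N Z psi (fun k => if (k < i)%N then p k else psi k) i m); last first.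
      by move=> k hk; have -> : (k < i)%N = false by lia.
    rewrite (@pref_ext d X N Z p (fun k => if (k < i)%N then p k else psi k) i); last first.
      by move=> k hk; rewrite hk.
    rewrite mid_pref; exact: cast_pref.
  exists (castL ej \o @mid d X N Z psi j (N - j)%N), (@pref d X N Z c1 j), (@pref d X N Z c2 j).
  split.
    exists psi, (N - j)%N, ej; split => // k hk; apply: Hpsi; lia.
  split.
    exists c1; split => // k hk; rewrite /c1; case: ifP => hki; first exact: Hp1.
    apply: Hpsi; lia.
  split.
    exists c2; split => // k hk; rewrite /c2; case: ifP => hki; first exact: Hp2.
    apply: Hpsi; lia.
  by rewrite (key p1 c1 erefl) (key p2 c2 erefl).
- apply: le_ereal_sup => r [f1 [f2 [Ff1 [Ff2 ->]]]].
  case: Ff1 => p1 [m1 [e1 [Hp1 ->]]]; case: Ff2 => p2 [m2 [e2 [Hp2 ->]]].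
  pose c1 : forall k, layer X N Z k -> layer X N Z k.+1 :=
    fun k => if (k < j)%N then phi k else p1 k.
  pose c2 : forall k, layer X N Z k -> layer X N Z k.+1 :=
    fun k => if (k < j)%N then phi k else p2 k.
  have key : forall (p c : forall k, layer X N Z k -> layer X N Z k.+1) m (em : (m + j)%N = N),
      c = (fun k => if (k < j)%N then phi k else p k) ->
      (castL ei \o @mid d X N Z c i (N - i)%N) \o @pref d X N Z phi i =
      (castL em \o @mid d X N Z p j m) \o @pref d X N Z phi j.
    move=> p c m em -> ; apply: funext => x /=.
    rewrite (@pref_ext d X N Z phi (fun k => if (k < j)%N then phi k else p k) i); last first.
      by move=> k hk; have -> : (k < j)%N = true by lia.
    rewrite mid_pref.
    rewrite (@mid_ext d X N Z p (fun k => if (k < j)%N then phi k else p k) j m); last first.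
      by move=> k hk; have -> : (k < j)%N = false by lia.
    rewrite (@pref_ext d X N Z phi (fun k => if (k < j)%N then phi k else p k) j); last first.
      by move=> k hk; rewrite hk.
    rewrite mid_pref; exact: cast_pref.
  exists (castL ei \o @mid d X N Z c1 i (N - i)%N), (castL ei \o @mid d X N Z c2 i (N - i)%N).
  split.
    exists c1, (N - i)%N, ei; split => // k hk; rewrite /c1; case: ifP => hkj.
      apply: hphi; lia.
    apply: Hp1; lia.
  split.
    exists c2, (N - i)%N, ei; split => // k hk; rewrite /c2; case: ifP => hkj.
      apply: hphi; lia.
    apply: Hp2; lia.
  by rewrite (key p1 c1 m1 e1 erefl) (key p2 c2 m2 e2 erefl).
Qed.
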